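(* Let $f:\mathbb{R}^n\to\mathbb{R}$ be bounded below and continuously differentiable with $\nabla f$ Lipschitz with constant $L_{\nabla f}$. Let $x\in\mathbb{R}^n$, $\Delta>0$, points $y_1,\ldots,y_p$ with $\|y_i-x\|\le\beta\Delta$ for some $\beta>0$ and all $i$, with $\hat F$ invertible, and let $m$ be the minimum Frobenius norm quadratic interpolation model of $f$ and $\ell_1,\ldots,\ell_p$ the associated minimum Frobenius norm Lagrange polynomials (see context). Suppose $\max_{y\in B(x,\Delta)}\max_{i}|\ell_i(y)|\le\Lambda_\infty$. Then the Hessian $H$ of $m$ satisfies $\|H\|\le\kappa_H:=12L_{\nabla f}p\beta^2\Lambda_\infty$.
   Context: Here $n+2\le p\le(n+1)(n+2)/2-1$. Let $\hat s_i=(y_i-x)/\Delta$, $\hat M$ with rows $[1,\hat s_i^T]$, $\hat P_{ij}=\tfrac12(\hat s_i^T\hat s_j)^2$, $\hat F=\begin{bmatrix}\hat P&\hat M\\ \hat M^T&0\end{bmatrix}$. For data values $v_1,\ldots,v_p$, the minimum Frobenius norm interpolant is the quadratic $q(y)=c+g^T(y-x)+\tfrac12(y-x)^TH(y-x)$ with $H$ symmetric minimizing $\tfrac14\|H\|_F^2$ subject to $q(y_i)=v_i$ for all $i$; when $\hat F$ is invertible it is unique and obtained by solving $\hat F[\hat\lambda;c;\Delta g]=[v;0;0_n]$ and setting $H=\sum_i(\hat\lambda_i/\Delta^4)(y_i-x)(y_i-x)^T$. The model $m$ uses $v_i=f(y_i)$; the Lagrange polynomial $\ell_i$ uses $v_j=\delta_{ij}$.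 $\|H\|$ is the operator 2-norm; $B(x,\Delta)=\{y:\|y-x\|\le\Delta\}$. *)

(* Defs.v *)
From HB Require Import structures.
From mathcomp Require Import all_boot all_order all_algebra.
From mathcomp Require Import all_classical all_reals all_analysis.
Set Implicit Arguments. Unset Strict Implicit. Unset Printing Implicit Defensive.
Import Order.TTheory GRing.Theory Num.Theory.
Import numFieldNormedType.Exports.
Local Open Scope ring_scope.
Local Open Scope classical_set_scope.

Section Defs.
Variable R : realType.

Definition enorm (n : nat) (v : 'rV[R]_n) : R := Num.sqrt (\sum_i (v 0 i) ^+ 2).

Definition opnorm2 (n : nat) (H : 'M[R]_n) : R :=
  sup [set enorm (v *m H^T) | v in [set v : 'rV[R]_n | enorm v <= 1]].

Definition frob2 (n : nat) (H : 'M[R]_n) : R := \sum_i \sum_j (H i j) ^+ 2.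

Definition grad (n : nat) (f : 'rV[R]_n -> R) (x : 'rV[R]_n) : 'rV[R]_n :=
  \row_j derive f x (delta_mx 0 j : 'rV[R]_n).

Definition quad (n : nat) (x : 'rV[R]_n) (c : R) (g : 'rV[R]_n) (H : 'M[R]_n)
  (y : 'rV[R]_n) : R :=
  c + (g *m (y - x)^T) 0 0 + 2^-1 * (((y - x) *m H *m (y - x)^T) 0 0).

Definition is_mfn_interp (n p : nat) (x : 'rV[R]_n) (y : 'I_p -> 'rV[R]_n)
  (v : 'I_p -> R) (c : R) (g : 'rV[R]_n) (H : 'M[R]_n) : Prop :=
  [/\ H^T = H,
      (forall i, quad x c g H (y i) = v i) &
      (forall c' g' H', H'^T = H' -> (forall i, quad x c' g' H' (y i) = v i) ->
         4^-1 * frob2 H <= 4^-1 * frob2 H')].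

Definition shat (n p : nat) (x : 'rV[R]_n) (Delta : R) (y : 'I_p -> 'rV[R]_n)
  (i : 'I_p) : 'rV[R]_n := Delta^-1 *: (y i - x).

Definition Mhat (n p : nat) (x : 'rV[R]_n) (Delta : R) (y : 'I_p -> 'rV[R]_n)
  : 'M[R]_(p, 1 + n) :=
  row_mx (const_mx 1) (\matrix_(i < p) shat x Delta y i).

Definition Phat (n p : nat) (x : 'rV[R]_n) (Delta : R) (y : 'I_p -> 'rV[R]_n)
  : 'M[R]_p :=
  \matrix_(i, j) (2^-1 * ((shat x Delta y i *m (shat x Delta y j)^T) 0 0) ^+ 2).

Definition Fhat (n p : nat) (x : 'rV[R]_n) (Delta : R) (y : 'I_p -> 'rV[R]_n)
  : 'M[R]_(p + (1 + n)) :=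
  block_mx (Phat x Delta y) (Mhat x Delta y) (Mhat x Delta y)^T 0.

End Defs.

(* Main.v *)
Require Import Defs.
From HB Require Import structures.
From mathcomp Require Import all_boot all_order all_algebra.
From mathcomp Require Import all_classical all_reals all_analysis.
From mathcomp Require Import ring lra.
Import Order.TTheory GRing.Theory Num.Theory.
Import numFieldNormedType.Exports.
Local Open Scope ring_scope.

Definition dotv {R : realType} {n : nat} (u v : 'rV[R]_n) : R := (u *m v^T) 0 0.
Definition nsq {R : realType} {n : nat} (v : 'rV[R]_n) : R := dotv v v.

Lemma dotvE {R : realType} {n : nat} (u v : 'rV[R]_n) : dotv u v = \sum_i u 0 i * v 0 i.
Proof. by rewrite /dotv !mxE; apply: eq_bigr => i _; rewrite mxE. Qed.

Lemma dotvC {R : realType} {n : nat} (u v : 'rV[R]_n) : dotv u v = dotv v u.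
Proof. by rewrite !dotvE; apply: eq_bigr => i _; rewrite mulrC. Qed.

Lemma dotvDl {R : realType} {n : nat} (u w v : 'rV[R]_n) : dotv (u + w) v = dotv u v + dotv w v.
Proof. by rewrite !dotvE -big_split; apply: eq_bigr => i _; rewrite mxE mulrDl. Qed.

Lemma dotvNl {R : realType} {n : nat} (u v : 'rV[R]_n) : dotv (- u) v = - dotv u v.
Proof. by rewrite !dotvE -sumrN; apply: eq_bigr => i _; rewrite mxE mulNr. Qed.

Lemma dotvZl {R : realType} {n : nat} a (u v : 'rV[R]_n) : dotv (a *: u) v = a * dotv u v.
Proof. by rewrite !dotvE mulr_sumr; apply: eq_bigr => i _; rewrite mxE mulrA. Qed.

Lemma dotvBl {R : realType} {n : nat} (u w v : 'rV[R]_n) : dotv (u - w) v = dotv u v - dotv w v.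
Proof. by rewrite dotvDl dotvNl. Qed.

Lemma dotvDr {R : realType} {n : nat} (u w v : 'rV[R]_n) : dotv v (u + w) = dotv v u + dotv v w.
Proof. by rewrite !(dotvC v) dotvDl. Qed.
Lemma dotvNr {R : realType} {n : nat} (u v : 'rV[R]_n) : dotv v (- u) = - dotv v u.
Proof. by rewrite !(dotvC v) dotvNl. Qed.
Lemma dotvZr {R : realType} {n : nat} a (u v : 'rV[R]_n) : dotv v (a *: u) = a * dotv v u.
Proof. by rewrite !(dotvC v) dotvZl. Qed.
Lemma dotvBr {R : realType} {n : nat} (u w v : 'rV[R]_n) : dotv v (u - w) = dotv v u - dotv v w.
Proof. by rewrite dotvDr dotvNr. Qed.

Lemma dotv_suml {R : realType} {n : nat} (I : finType) (F : I -> 'rV[R]_n) v :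
  dotv (\sum_i F i) v = \sum_i dotv (F i) v.
Proof.
rewrite !dotvE.
under eq_bigr => j _ do rewrite summxE mulr_suml.
rewrite exchange_big /=; apply: eq_bigr => i _; by rewrite dotvE.
Qed.

Lemma nsq_ge0 {R : realType} {n : nat} (v : 'rV[R]_n) : 0 <= nsq v.
Proof. rewrite /nsq dotvE; apply: sumr_ge0 => i _; by rewrite -expr2 sqr_ge0. Qed.

Lemma enormE {R : realType} {n : nat} (v : 'rV[R]_n) : enorm v = Num.sqrt (nsq v).
Proof. by rewrite /enorm /nsq dotvE; congr Num.sqrt; apply: eq_bigr => i _; rewrite expr2. Qed.

Lemma enorm_sqr {R : realType} {n : nat} (v : 'rV[R]_n) : enorm v ^+ 2 = nsq v.
Proof. by rewrite enormE sqr_sqrtr // nsq_ge0. Qed.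

Lemma enorm_ge0 {R : realType} {n : nat} (v : 'rV[R]_n) : 0 <= enorm v.
Proof. by rewrite enormE sqrtr_ge0. Qed.

Lemma nsq_eq0 {R : realType} {n : nat} (v : 'rV[R]_n) : nsq v = 0 -> v = 0.
Proof.
rewrite /nsq dotvE => /eqP; rewrite psumr_eq0 => [/allP H|i _]; last by rewrite -expr2 sqr_ge0.
apply/rowP => i; rewrite mxE; have := H i (mem_index_enum i).
by rewrite mulf_eq0 orbb => /eqP.
Qed.

Lemma prod_sums {R : realType} {n : nat} (a b : 'I_n -> R) :
  (\sum_i a i) * (\sum_j b j) = \sum_i \sum_j a i * b j.
Proof. rewrite mulr_suml; apply: eq_bigr => i _; by rewrite mulr_sumr. Qed.

Lemma cauchy_schwarz {R : realType} {n : nat} (u v : 'rV[R]_n) :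
  `|dotv u v| <= enorm u * enorm v.
Proof.
have key : dotv u v ^+ 2 <= nsq u * nsq v.
  have H0 : 0 <= \sum_i \sum_j (u 0 i * v 0 j - u 0 j * v 0 i) ^+ 2.
    by apply: sumr_ge0 => i _; apply: sumr_ge0 => j _; exact: sqr_ge0.
  have E : \sum_i \sum_j (u 0 i * v 0 j - u 0 j * v 0 i) ^+ 2
         = 2 * (nsq u * nsq v) - 2 * dotv u v ^+ 2.
    have T i j : (u 0 i * v 0 j - u 0 j * v 0 i) ^+ 2 =
       (u 0 i * u 0 i) * (v 0 j * v 0 j) + (v 0 i * v 0 i) * (u 0 j * u 0 j)
       - 2 * ((u 0 i * v 0 i) * (u 0 j * v 0 j)) by ring.
    under eq_bigr => i _ do under eq_bigr => j _ do rewrite T.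
    under eq_bigr => i _ do rewrite sumrB big_split /= -mulr_sumr -!mulr_sumr.
    rewrite sumrB big_split /= -!mulr_suml.
    rewrite /nsq !dotvE expr2 -!mulr_sumr -!mulr_suml.
    ring.
  lra.
rewrite -sqrtr_sqr !enormE -sqrtrM ?nsq_ge0 //.
by rewrite ler_sqrt // mulr_ge0 // nsq_ge0.
Qed.
Definition bf {R : realType} {n : nat} (H : 'M[R]_n) (a b : 'rV[R]_n) : R := (a *m H *m b^T) 0 0.
Definition fip {R : realType} {n : nat} (A B : 'M[R]_n) : R := \sum_i \sum_j A i j * B i j.

Lemma quadE {R : realType} {n : nat} (x : 'rV[R]_n) c g H z :
  quad x c g H z = c + dotv g (z - x) + 2^-1 * bf H (z - x) (z - x).
Proof. by []. Qed.

Lemma trZ {R : realType} {m n : nat} t (b : 'M[R]_(m, n)) : (t *: b)^T = t *: b^T.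
Proof. by apply/matrixP => i j; rewrite !mxE. Qed.
Lemma trD {R : realType} {m n : nat} (a b : 'M[R]_(m, n)) : (a + b)^T = a^T + b^T.
Proof. by apply/matrixP => i j; rewrite !mxE. Qed.
Lemma trN {R : realType} {m n : nat} (b : 'M[R]_(m, n)) : (- b)^T = - b^T.
Proof. by apply/matrixP => i j; rewrite !mxE. Qed.

Lemma bfDH {R : realType} {n : nat} (H K : 'M[R]_n) a b : bf (H + K) a b = bf H a b + bf K a b.
Proof. by rewrite /bf mulmxDr mulmxDl mxE. Qed.
Lemma bfNH {R : realType} {n : nat} (H : 'M[R]_n) a b : bf (- H) a b = - bf H a b.
Proof. by rewrite /bf mulmxN mulNmx mxE. Qed.
Lemma bfBH {R : realType} {n : nat} (H K : 'M[R]_n) a b : bf (H - K) a b = bf H a b - bf K a b.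
Proof. by rewrite bfDH bfNH. Qed.
Lemma bfZH {R : realType} {n : nat} t (H : 'M[R]_n) a b : bf (t *: H) a b = t * bf H a b.
Proof. by rewrite /bf -scalemxAr -scalemxAl mxE. Qed.
Lemma bf0H {R : realType} {n : nat} (a b : 'rV[R]_n) : bf 0 a b = 0.
Proof. by rewrite /bf mulmx0 mul0mx mxE. Qed.
Lemma bf_sumH {R : realType} {n : nat} (I : finType) (F : I -> 'M[R]_n) a b :
  bf (\sum_i F i) a b = \sum_i bf (F i) a b.
Proof.
rewrite /bf mulmx_sumr mulmx_suml summxE; apply: eq_bigr => i _; done.
Qed.
Lemma bfDl {R : realType} {n : nat} (H : 'M[R]_n) a a' b : bf H (a + a') b = bf H a b + bf H a' b.
Proof. by rewrite /bf !mulmxDl mxE. Qed.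
Lemma bfNl {R : realType} {n : nat} (H : 'M[R]_n) a b : bf H (- a) b = - bf H a b.
Proof. by rewrite /bf !mulNmx mxE. Qed.
Lemma bfZl {R : realType} {n : nat} (H : 'M[R]_n) t a b : bf H (t *: a) b = t * bf H a b.
Proof. by rewrite /bf -!scalemxAl mxE. Qed.
Lemma bfDr {R : realType} {n : nat} (H : 'M[R]_n) a b b' : bf H a (b + b') = bf H a b + bf H a b'.
Proof. by rewrite /bf trD mulmxDr mxE. Qed.
Lemma bfNr {R : realType} {n : nat} (H : 'M[R]_n) a b : bf H a (- b) = - bf H a b.
Proof. by rewrite /bf trN mulmxN mxE. Qed.
Lemma bfZr {R : realType} {n : nat} (H : 'M[R]_n) t a b : bf H a (t *: b) = t * bf H a b.
Proof. by rewrite /bf trZ -scalemxAr mxE. Qed.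
Lemma bfC {R : realType} {n : nat} (H : 'M[R]_n) a b : H^T = H -> bf H a b = bf H b a.
Proof.
move=> sH; rewrite /bf.
transitivity (((a *m H *m b^T)^T) 0 0); first by rewrite [RHS]mxE.
by rewrite !trmx_mul trmxK sH mulmxA.
Qed.
Lemma bf0v {R : realType} {n : nat} (H : 'M[R]_n) b : bf H 0 b = 0.
Proof. by rewrite /bf !mul0mx mxE. Qed.

Lemma quad_lin {R : realType} {n : nat} (x : 'rV[R]_n) c1 g1 H1 c2 g2 H2 t z :
  quad x (c1 + t * c2) (g1 + t *: g2) (H1 + t *: H2) z
  = quad x c1 g1 H1 z + t * quad x c2 g2 H2 z.
Proof. rewrite !quadE dotvDl dotvZl bfDH bfZH; ring. Qed.

Lemma quad_sub {R : realType} {n : nat} (x : 'rV[R]_n) c1 g1 H1 c2 g2 H2 z :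
  quad x (c1 - c2) (g1 - g2) (H1 - H2) z
  = quad x c1 g1 H1 z - quad x c2 g2 H2 z.
Proof. rewrite !quadE dotvBl bfBH; ring. Qed.

Lemma quad_sum {R : realType} {n p : nat} (x : 'rV[R]_n) (a : 'I_p -> R) c g H z :
  quad x (\sum_i a i * c i) (\sum_i a i *: g i) (\sum_i a i *: H i) z
  = \sum_i a i * quad x (c i) (g i) (H i) z.
Proof.
rewrite [LHS]quadE dotv_suml bf_sumH mulr_sumr -!big_split /=.
apply: eq_bigr => i _; rewrite quadE dotvZl bfZH; ring.
Qed.

Lemma fipDl {R : realType} {n : nat} (A B C : 'M[R]_n) : fip (A + B) C = fip A C + fip B C.
Proof. rewrite /fip -big_split; apply: eq_bigr => i _; rewrite -big_split; apply: eq_bigr => j _; by rewrite /= mxE mulrDl. Qed.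
Lemma fipBl {R : realType} {n : nat} (A B C : 'M[R]_n) : fip (A - B) C = fip A C - fip B C.
Proof. rewrite /fip -sumrB; apply: eq_bigr => i _; rewrite -sumrB; apply: eq_bigr => j _; rewrite !mxE; ring. Qed.
Lemma fip_sum {R : realType} {n p : nat} (a : 'I_p -> R) (A : 'I_p -> 'M[R]_n) C :
  fip (\sum_k a k *: A k) C = \sum_k a k * fip (A k) C.
Proof.
rewrite /fip.
under eq_bigr => i _ do under eq_bigr => j _ do rewrite summxE mulr_suml.
under [RHS]eq_bigr => k _ do rewrite mulr_sumr.
rewrite [RHS]exchange_big /=; apply: eq_bigr => i _.
under [RHS]eq_bigr => k _ do rewrite mulr_sumr.
rewrite [RHS]exchange_big /=; apply: eq_bigr => j _.
by apply: eq_bigr => k _; rewrite !mxE mulrA.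
Qed.

Lemma frob2E {R : realType} {n : nat} (A : 'M[R]_n) : frob2 A = fip A A.
Proof. by rewrite /frob2 /fip; apply: eq_bigr => i _; apply: eq_bigr => j _; rewrite expr2. Qed.

Lemma frob2_expand {R : realType} {n : nat} (H K : 'M[R]_n) t :
  frob2 (H + t *: K) = frob2 H + 2 * t * fip H K + t ^+ 2 * frob2 K.
Proof.
rewrite /frob2 /fip !mulr_sumr -!big_split /=; apply: eq_bigr => i _.
rewrite !mulr_sumr -!big_split /=; apply: eq_bigr => j _.
rewrite !mxE; ring.
Qed.

Lemma fip_self_eq0 {R : realType} {n : nat} (A : 'M[R]_n) : fip A A = 0 -> A = 0.
Proof.
rewrite /fip => /eqP; rewrite psumr_eq0 => [/allP HA|i _]; last first.
  by apply: sumr_ge0 => j _; rewrite -expr2 sqr_ge0.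
apply/matrixP => i j; rewrite mxE.
have := HA i (mem_index_enum i); rewrite /=.
rewrite psumr_eq0 => [/allP HB|k _]; last by rewrite -expr2 sqr_ge0.
by have := HB j (mem_index_enum j); rewrite mulf_eq0 orbb => /eqP.
Qed.

Lemma mfn_orth {R : realType} {n p : nat} {x : 'rV[R]_n} {y : 'I_p -> 'rV[R]_n} {v : 'I_p -> R} {c : R} {g : 'rV[R]_n} {H : 'M[R]_n} {c' : R} {g' : 'rV[R]_n} {K : 'M[R]_n} :
  is_mfn_interp x y v c g H -> K^T = K -> (forall i, quad x c' g' K (y i) = 0) ->
  fip H K = 0.
Proof.
case=> sH iH mH sK iK.
have ineq t : 0 <= 2 * t * fip H K + t ^+ 2 * frob2 K.
  have := mH (c + t * c') (g + t *: g') (H + t *: K).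
  rewrite trD trZ sH sK => /(_ erefl).
  have : forall i, quad x (c + t * c') (g + t *: g') (H + t *: K) (y i) = v i.
    by move=> i; rewrite quad_lin iH iK mulr0 addr0.
  move=> hh /(_ hh); rewrite frob2_expand; lra.
have b0 : 0 <= frob2 K by rewrite /frob2; apply: sumr_ge0 => i _; apply: sumr_ge0 => j _; exact: sqr_ge0.
set a := fip H K in ineq *; set b := frob2 K in ineq b0 *.
set t := - a / (b + 1).
have tb : t * (b + 1) = - a by rewrite /t mulfVK // gt_eqF // ltr_wpDl.
have := ineq t.
have -> : 2 * t * a + t ^+ 2 * b = - t ^+ 2 * (b + 2).
  have -> : a = - (t * (b + 1)) by rewrite tb opprK.
  ring.
move=> h.
have t0 : t ^+ 2 <= 0 by nra.
have : t = 0 by apply/eqP; rewrite -sqrf_eq0 eq_le t0 sqr_ge0.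
move=> tz; move: tb; rewrite tz mul0r => /eqP; rewrite eq_sym oppr_eq0 => /eqP //.
Qed.

Lemma dotv0r {R : realType} {n : nat} (g : 'rV[R]_n) : dotv g 0 = 0.
Proof. by rewrite /dotv trmx0 mulmx0 mxE. Qed.
Lemma nsq0 {R : realType} {n : nat} : nsq (0 : 'rV[R]_n) = 0.
Proof. by rewrite /nsq dotv0r. Qed.
Lemma enorm0 {R : realType} {n : nat} : enorm (0 : 'rV[R]_n) = 0.
Proof. by rewrite enormE nsq0 sqrtr0. Qed.
Lemma nsqZ {R : realType} {n : nat} t (v : 'rV[R]_n) : nsq (t *: v) = t ^+ 2 * nsq v.
Proof. by rewrite /nsq dotvZl dotvZr mulrA expr2. Qed.
Lemma nsqN {R : realType} {n : nat} (v : 'rV[R]_n) : nsq (- v) = nsq v.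
Proof. by rewrite /nsq dotvNl dotvNr opprK. Qed.

Lemma lag_hess {R : realType} {n : nat} (x : 'rV[R]_n) (c : R) (g : 'rV[R]_n) (K : 'M[R]_n) (Delta Lambda : R) :
  0 < Delta -> (forall z, enorm (z - x) <= Delta -> `|quad x c g K z| <= Lambda) ->
  forall z, Delta ^+ 2 * `|bf K z z| <= 4 * Lambda * nsq z.
Proof.
move=> D0 hq z.
have L0 : 0 <= Lambda.
  apply: le_trans (normr_ge0 _) (hq x _); by rewrite subrr enorm0 ltW.
case: (eqVneq (nsq z) 0) => [/nsq_eq0 -> | nz].
  by rewrite bf0v normr0 mulr0 nsq0 mulr0.
have nz0 : 0 < nsq z by rewrite lt_def nz nsq_ge0.
set r := enorm z.
have r2 : r ^+ 2 = nsq z by rewrite /r enorm_sqr.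
have r0 : 0 < r.
  rewrite lt_def enorm_ge0 andbT; apply/eqP => r0; move: nz0; rewrite -r2 r0; lra.
set s := Delta / r.
set v := s *: z.
have sr : s ^+ 2 * r ^+ 2 = Delta ^+ 2 by rewrite /s; field; rewrite gt_eqF.
have nv : nsq v = Delta ^+ 2 by rewrite /v nsqZ -r2 sr.
have ev : enorm v = Delta by rewrite enormE nv sqrtr_sqr gtr0_norm.
have h1 : `|quad x c g K (v + x)| <= Lambda by apply: hq; rewrite addrK ev.
have h2 : `|quad x c g K (- v + x)| <= Lambda.
  by apply: hq; rewrite addrK !enormE nsqN -enormE ev.
have h3 : `|quad x c g K x| <= Lambda by apply: hq; rewrite subrr enorm0 ltW.
have hid : quad x c g K (v + x) + quad x c g K (- v + x) - 2 * quad x c g K x = bf K v v.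
  rewrite !quadE !addrK subrr dotvNr bfNl bfNr opprK bf0v dotv0r !mulr0 !addr0; lra.
have bv : `|bf K v v| <= 4 * Lambda.
  rewrite -hid; move: h1 h2 h3; rewrite !ler_norml => /andP[a1 a2] /andP[b1 b2] /andP[c1 c2].
  apply/andP; split; lra.
have bvz : bf K v v = s ^+ 2 * bf K z z by rewrite /v bfZl bfZr mulrA expr2.
rewrite bvz normrM ger0_norm ?sqr_ge0 // in bv.
rewrite -r2 -sr.
have := ler_wpM2l (sqr_ge0 r) bv.
set A := s ^+ 2; set B := r ^+ 2; set C := `|bf K z z|.
move=> hh; apply: le_trans _ (le_trans hh _); rewrite le_eqVlt; apply/orP; left; apply/eqP; ring.
Qed.

Lemma opnorm_bound {R : realType} {n : nat} (H : 'M[R]_n) K :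
  H^T = H -> 0 <= K -> (forall z, `|bf H z z| <= K * nsq z) -> opnorm2 H <= K.
Proof.
move=> sH K0 hb; rewrite /opnorm2; apply: ge_sup.
  exists (enorm ((0 : 'rV[R]_n) *m H^T)); exists 0 => //=.
  by rewrite enorm0 ler01.
move=> _ [v /= hv <-]; rewrite sH.
set w := v *m H.
case: (eqVneq (nsq w) 0) => [/nsq_eq0 -> | nz]; first by rewrite enorm0.
have nz0 : 0 < nsq w by rewrite lt_def nz nsq_ge0.
set s := enorm w.
have s2 : s ^+ 2 = nsq w by rewrite /s enorm_sqr.
have s0 : 0 < s.
  rewrite lt_def enorm_ge0 andbT; apply/eqP => e0; move: nz0; rewrite -s2 e0; lra.
set u := s^-1 *: w.
have nu : nsq u = 1 by rewrite /u nsqZ -s2 exprVn mulVf // expf_neq0 // gt_eqF.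
have nv : nsq v <= 1.
  rewrite -enorm_sqr; have := enorm_ge0 v => e0.
  by rewrite -(expr1n _ 2) ler_pXn2r // ?nnegrE.
have bvw : bf H v w = nsq w by rewrite /bf /nsq /dotv.
have bvu : bf H v u = s by rewrite /u bfZr bvw -s2 expr2 mulKf // gt_eqF.
have pol : 4 * bf H v u = bf H (v + u) (v + u) - bf H (v - u) (v - u).
  rewrite !bfDl !bfDr !bfNl !bfNr (bfC _ u v sH); ring.
have par : nsq (v + u) + nsq (v - u) = 2 * nsq v + 2 * nsq u.
  rewrite /nsq !dotvDl !dotvDr !dotvNl !dotvNr (dotvC u v); ring.
have h1 := hb (v + u); have h2 := hb (v - u).
move: h1 h2; rewrite !ler_norml => /andP[a1 a2] /andP[b1 b2].
rewrite bvu in pol.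
have : 4 * s <= K * (nsq (v + u) + nsq (v - u)) by rewrite pol; lra.
rewrite par nu => h.
have : K * (2 * nsq v + 2 * 1) <= K * 4.
  by rewrite ler_wpM2l //; lra.
lra.
Qed.

Lemma dgrad {R : realType} {n : nat} (f : 'rV[R]_n -> R) z v :
  differentiable f z -> 'D_v f z = dotv (grad f z) v.
Proof.
move=> df; rewrite deriveE // {1}(row_sum_delta v) linear_sum dotvE.
apply: eq_bigr => j _; rewrite linearZ /= /grad mxE deriveE //.
by rewrite mulrC.
Qed.

Lemma line_quot {R : realType} {n : nat} (f : 'rV[R]_n -> R) (x d : 'rV[R]_n) (t : R) :
  (fun h : R => h^-1 *: (((fun s : R => f (s *: d + x)) \o shift t) (h *: 1) - f (t *: d + x)))
  = (fun h : R => h^-1 *: ((f \o shift (t *: d + x)) (h *: d) - f (t *: d + x))).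
Proof.
apply: funext => h /=.
congr (_ *: (f _ - _)).
rewrite /shift /= scalerDl addrA.
congr (_ *: _ + _ + _).
by rewrite /GRing.scale /= mulr1.
Qed.

Lemma line_derive {R : realType} {n : nat} (f : 'rV[R]_n -> R) (x d : 'rV[R]_n) (t : R) :
  (forall z, differentiable f z) ->
  is_derive t 1 (fun s : R => f (s *: d + x)) (dotv (grad f (t *: d + x)) d).
Proof.
move=> df.
have dv : derivable f (t *: d + x) d by apply: diff_derivable.
apply: DeriveDef.
  by rewrite /derivable line_quot.
by rewrite /derive line_quot -/(derive f (t *: d + x) d) dgrad.
Qed.

Lemma enormZ {R : realType} {n : nat} t (v : 'rV[R]_n) : enorm (t *: v) = `|t| * enorm v.
Proof. by rewrite !enormE nsqZ sqrtrM ?sqr_ge0 // sqrtr_sqr. Qed.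

Lemma taylor {R : realType} {n : nat} (f : 'rV[R]_n -> R) (Lg : R) (x d : 'rV[R]_n) :
  (forall z, differentiable f z) ->
  (forall z w, enorm (grad f z - grad f w) <= Lg * enorm (z - w)) -> 0 <= Lg ->
  `|f (d + x) - f x - dotv (grad f x) d| <= Lg * nsq d.
Proof.
move=> df lip L0.
set phi := fun s : R => f (s *: d + x).
have hd := fun t => line_derive f x d t df.
have [|c /andP[c0 c1] E] := MVT (@ltr01 R) (fun t _ => hd t).
  apply: derivable_within_continuous => t _.
  exact: (@ex_derive _ _ _ _ _ _ _ (hd t)).
move: E; rewrite /phi scale1r scale0r add0r subr0 mulr1 => ->.
rewrite -dotvBl.
apply: le_trans (cauchy_schwarz _ _) _.
apply: le_trans (ler_wpM2r (enorm_ge0 d) (lip _ _)) _.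
rewrite addrK enormZ -mulrA -enorm_sqr expr2.
apply: ler_wpM2l => //.
rewrite -mulrA ler_piMl ?mulr_ge0 ?enorm_ge0 //.
by rewrite ger0_norm ?ltW.
Qed.

Lemma tr_sum {R : realType} {n p : nat} (F : 'I_p -> 'M[R]_n) : (\sum_i F i)^T = \sum_i (F i)^T.
Proof. by apply/matrixP => i j; rewrite !mxE !summxE; apply: eq_bigr => k _; rewrite mxE. Qed.

Theorem lemma6p7 (R : realType) (n p : nat) (f : 'rV[R]_n -> R) (Lg : R)
  (x : 'rV[R]_n) (Delta beta Lambda : R) (y : 'I_p -> 'rV[R]_n)
  (c : R) (g : 'rV[R]_n) (H : 'M[R]_n)
  (cl : 'I_p -> R) (gl : 'I_p -> 'rV[R]_n) (Hl : 'I_p -> 'M[R]_n) :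
  (n + 2 <= p)%N -> (p <= (n + 1) * (n + 2) %/ 2 - 1)%N ->
  (exists b : R, forall z, b <= f z) ->
  (forall z, differentiable f z) ->
  continuous (grad f) ->
  (forall z w, enorm (grad f z - grad f w) <= Lg * enorm (z - w)) ->
  0 < Delta -> 0 < beta ->
  (forall i, enorm (y i - x) <= beta * Delta) ->
  Fhat x Delta y \in unitmx ->
  is_mfn_interp x y (fun i => f (y i)) c g H ->
  (forall i, is_mfn_interp x y (fun j => (i == j)%:R) (cl i) (gl i) (Hl i)) ->
  (forall z, enorm (z - x) <= Delta ->
     forall i, `|quad x (cl i) (gl i) (Hl i) z| <= Lambda) ->
  opnorm2 H <= 12 * Lg * p%:R * beta ^+ 2 * Lambda.
Proof.
move=> hp1 hp2 _ df _ lip D0 b0 hy _ hm hl hL.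
have n0 : (0 < n)%N.
  move: hp1 hp2; case: (n) => // h1 h2.
  by have := leq_trans h1 h2.
have p0 : (0 < p)%N by apply: leq_trans hp1; rewrite addn2.
pose i0 : 'I_p := Ordinal p0.
have L0 : 0 <= Lg.
  pose u : 'rV[R]_n := const_mx 1.
  have nu : nsq u = n%:R.
    rewrite /nsq dotvE; under eq_bigr => i _ do rewrite mxE mulr1.
    by rewrite sumr_const card_ord.
  have eu : 0 < enorm (u - 0) by rewrite subr0 enormE sqrtr_gt0 nu ltr0n.
  have := le_trans (enorm_ge0 _) (lip u 0).
  by rewrite pmulr_lge0.
have La0 : 0 <= Lambda.
  apply: le_trans (normr_ge0 _) (hL x _ i0); by rewrite subrr enorm0 ltW.
have [sH _ _] := hm.
pose a i := f (y i) - f x - dotv (grad f x) (y i - x).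
pose C := \sum_i a i * cl i.
pose Gv := \sum_i a i *: gl i.
pose G := \sum_i a i *: Hl i.
have interpG j : quad x C Gv G (y j) = a j.
  rewrite quad_sum.
  under eq_bigr => i _ do (have [_ hi _] := hl i; rewrite hi).
  rewrite (bigD1 j) //= eqxx mulr1 big1 ?addr0 // => i /negbTE ->.
  by rewrite mulr0.
have sG : G^T = G.
  rewrite /G tr_sum; apply: eq_bigr => i _.
  by have [si _ _] := hl i; rewrite trZ si.
have sD : (H - G)^T = H - G by rewrite trD trN sH sG.
have int0 j : quad x (c - C - f x) (g - Gv - grad f x) (H - G) (y j) = 0.
  rewrite -[H - G]subr0 quad_sub quad_sub interpG.
  have [_ hi _] := hm; rewrite hi /a !quadE bf0H; ring.
have oH : fip H (H - G) = 0 by apply: (mfn_orth hm sD int0).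
have oG : fip G (H - G) = 0.
  rewrite /G fip_sum big1 // => i _.
  by rewrite (mfn_orth (hl i) sD int0) mulr0.
have HG : H = G.
  apply/eqP; rewrite -subr_eq0; apply/eqP; apply: fip_self_eq0.
  by rewrite fipBl oH oG subrr.
pose K := 4 * Lg * beta ^+ 2 * Lambda.
have K0 : 0 <= K.
  rewrite /K; apply: mulr_ge0 => //; apply: mulr_ge0; last exact: sqr_ge0.
  by apply: mulr_ge0.
apply: (@le_trans _ _ (K * p%:R)).
  apply: opnorm_bound => //; first by rewrite mulr_ge0.
  move=> z; rewrite HG /G bf_sumH.
  apply: le_trans (ler_norm_sum _ _ _) _.
  rewrite (_ : K * p%:R * nsq z = \sum_(i < p) (K * nsq z)); last first.
    by rewrite sumr_const card_ord -[RHS]mulr_natr mulrAC.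
  apply: ler_sum => i _.
  rewrite bfZH normrM.
  have ha : `|a i| <= Lg * (beta * Delta) ^+ 2.
    have := taylor f Lg x (y i - x) df lip L0; rewrite subrK => h.
    apply: le_trans h _; apply: ler_wpM2l => //.
    rewrite -enorm_sqr; have := hy i; have := enorm_ge0 (y i - x); nra.
  have hb := lag_hess x (cl i) (gl i) (Hl i) Delta Lambda D0 (fun z hz => hL z hz i) z.
  have := ler_wpM2r (normr_ge0 (bf (Hl i) z z)) ha.
  move=> h1; apply: le_trans h1 _.
  have h2 := ler_wpM2l (mulr_ge0 L0 (sqr_ge0 beta)) hb.
  have e1 : Lg * (beta * Delta) ^+ 2 * `|bf (Hl i) z z| = Lg * beta ^+ 2 * (Delta ^+ 2 * `|bf (Hl i) z z|) by ring.
  have e2 : Lg * beta ^+ 2 * (4 * Lambda * nsq z) = K * nsq z by rewrite /K; ring.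
  by rewrite e1 -e2.
rewrite /K.
have : 0 <= Lg * p%:R * beta ^+ 2 * Lambda.
  apply: mulr_ge0 => //; apply: mulr_ge0; last exact: sqr_ge0.
  by apply: mulr_ge0.
nra.
Qed.
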